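(* Let $\mathbf{f}:\mathbb{R}^n\times\mathbb{R}^+\to\mathbb{R}^n$ be continuously differentiable in its first argument and $\sigma:\mathbb{R}^n\times\mathbb{R}^+\to\mathbb{R}^{n\times d}$, and assume the Lipschitz condition $\|\mathbf{f}(\mathbf{a},t)-\mathbf{f}(\mathbf{b},t)\|+\|\sigma(\mathbf{a},t)-\sigma(\mathbf{b},t)\|\le K_1\|\mathbf{a}-\mathbf{b}\|$ and the growth condition $\|\mathbf{f}(\mathbf{a},t)\|^2+\|\sigma(\mathbf{a},t)\|^2\le K_2(1+\|\mathbf{a}\|^2)$ for all $t\ge0$, $\mathbf{a},\mathbf{b}\in\mathbb{R}^n$, for some constants $K_1,K_2>0$. Assume: (H1) there is $\lambda>0$ such that for all $\mathbf{a},t$, the largest eigenvalue of the symmetric part of the Jacobian $\frac{\partial \mathbf{f}}{\partial \mathbf{a}}(\mathbf{a},t)$ is at most $-\lambda$; (H2) there is a constant $C$ such that for all $\mathbf{a},t$, $\mathrm{tr}(\sigma(\mathbf{a},t)^T\sigma(\mathbf{a},t))\le C$. Consider the augmented process $\mathbf{x}=(\mathbf{a},\mathbf{b})\in\mathbb{R}^{2n}$ satisfying the Itô equation $d\mathbf{x}=\begin{pmatrix}\mathbf{f}(\mathbf{a},t)\\ \mathbf{f}(\mathbf{b},t)\end{pmatrix}dt+\begin{pmatrix}\sigma(\mathbf{a},t)&0\\0&\sigma(\mathbf{b},t)\end{pmatrix}\begin{pmatrix}dW_1^d\\ dW_2^d\end{pmatrix}$, where $W_1^d,W_2^d$ are independent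 standard $d$-dimensional Wiener processes, and let $V(\mathbf{x})=\|\mathbf{a}-\mathbf{b}\|^2$. Then for every $\mathbf{x}$ (and every $t$), $\widetilde{A}V(\mathbf{x})\le -2\lambda V(\mathbf{x})+2C$, where $\widetilde{A}$ is the infinitesimal operator of the process $\mathbf{x}(t)$.
   Context: For the Itô process $d\mathbf{x}=\hat{\mathbf{f}}(\mathbf{x},t)dt+\hat\sigma(\mathbf{x},t)dW$ the infinitesimal operator $\widetilde A$ coincides with the differential generator $\mathscr{L}V=\frac{\partial V}{\partial t}+\frac{\partial V}{\partial\mathbf{x}}\hat{\mathbf{f}}(\mathbf{x},t)+\frac12\mathrm{tr}\big(\hat\sigma(\mathbf{x},t)^T\frac{\partial^2V}{\partial\mathbf{x}^2}\hat\sigma(\mathbf{x},t)\big)$. *)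

(* Defs.v *)
From HB Require Import structures.
From mathcomp Require Import all_boot all_order all_algebra.
From mathcomp Require Import all_classical all_reals all_analysis.
Set Implicit Arguments. Unset Strict Implicit. Unset Printing Implicit Defensive.
Import Order.TTheory GRing.Theory Num.Theory.
Import numFieldNormedType.Exports.
Local Open Scope ring_scope.

Section Defs.
Variable R : realType.

Definition enorm (m : nat) (v : 'rV[R]_m) : R := Num.sqrt (\sum_i v 0 i ^+ 2).

Definition fnorm (m d : nat) (A : 'M[R]_(m, d)) : R := Num.sqrt (\tr (A^T *m A)).

Definition ebase (m : nat) (i : 'I_m) : 'rV[R]_m := delta_mx 0 i.

Definition pder (m : nat) (V : 'rV[R]_m -> R) (i : 'I_m) (x : 'rV[R]_m) : R :=
  'D_(ebase i) V x.

Definition hessian (m : nat) (V : 'rV[R]_m -> R) (x : 'rV[R]_m) : 'M[R]_m :=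
  \matrix_(i, j) pder (pder V j) i x.

(* Jacobian: we use MathComp-Analysis' derive.jacobian (= lin1_mx ('d F a),
   i.e. the transpose of the textbook Jacobian; its symmetric part is the same). *)

(* Differential generator of the Ito process dx = fh(x,t) dt + sh(x,t) dW:
   LV = dV/dt + (dV/dx) fh + 1/2 tr(sh^T (d^2V/dx^2) sh). *)
Definition generator (m d : nat) (fh : 'rV[R]_m -> R -> 'rV[R]_m)
  (sh : 'rV[R]_m -> R -> 'M[R]_(m, d)) (V : 'rV[R]_m -> R -> R)
  (x : 'rV[R]_m) (t : R) : R :=
  derive1 (fun s => V x s) t
  + \sum_i pder (fun y => V y t) i x * fh x t 0 i
  + 2^-1 * \tr ((sh x t)^T *m hessian (fun y => V y t) x *m sh x t).

Definition aug_drift (n : nat) (f : 'rV[R]_n -> R -> 'rV[R]_n)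
  (x : 'rV[R]_(n + n)) (t : R) : 'rV[R]_(n + n) :=
  row_mx (f (lsubmx x) t) (f (rsubmx x) t).

Definition aug_diff (n d : nat) (sigma : 'rV[R]_n -> R -> 'M[R]_(n, d))
  (x : 'rV[R]_(n + n)) (t : R) : 'M[R]_(n + n, d + d) :=
  block_mx (sigma (lsubmx x) t) 0 0 (sigma (rsubmx x) t).

Definition Vdist (n : nat) (x : 'rV[R]_(n + n)) (t : R) : R :=
  \sum_i (lsubmx x - rsubmx x) 0 i ^+ 2.

End Defs.

(* Main.v *)
Require Import Defs.
From HB Require Import structures.
From mathcomp Require Import all_boot all_order all_algebra.
From mathcomp Require Import all_classical all_reals all_analysis.
From mathcomp Require Import ring lra.
Import Order.TTheory GRing.Theory Num.Theory.
Import numFieldNormedType.Exports.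
Local Open Scope classical_set_scope.
Local Open Scope ring_scope.
Section S.
Variable R : realType.
Lemma derive_quad m (F : 'rV[R]_m -> R) a v P Q :
  (forall h : R, h != 0 -> F (h *: v + a) = F a + h * P + h ^+ 2 * Q) ->
  'D_v F a = P.
Proof.
move=> HF; rewrite /derive.
apply: cvg_lim => //.
have E : \forall h \near dnbhs (0:R), P + h * Q = h^-1 *: (F (h *: v + a) - F a).
  near=> h.
  have h0 : h != 0 by near: h; exact: nbhs_dnbhs_neq.
  rewrite HF //; change (P + h*Q = h^-1 * (F a + h*P + h^+2*Q - F a)); by field.
apply: (cvg_trans (near_eq_cvg E)).
have H0 : (fun h : R => h) @ dnbhs (0:R) --> (0:R) by apply: cvg_within; exact: cvg_id.
have := cvgD (cvg_cst P) (cvgMr_tmp (b:=Q) H0); rewrite mul0r addr0; exact.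
Unshelve. all: by end_near.
Qed.

Lemma cont_sum (T : topologicalType) k (F : 'I_k -> T -> R) :
  (forall i, continuous (F i)) -> continuous (fun x => \sum_i F i x).
Proof.
elim: k F => [|k IH] F HF.
  have -> : (fun x => \sum_(i < 0) F i x) = (fun=> 0) by apply/funext => x; rewrite big_ord0.
  exact: cst_continuous.
have -> : (fun x => \sum_(i < k.+1) F i x) =
   (fun x => \sum_(i < k) F (widen_ord (leqnSn k) i) x) + (fun x => F ord_max x).
  by apply/funext => x; rewrite big_ord_recr.
move=> x; apply: continuousD; last exact: HF.
exact: IH.
Qed.

Lemma cont_quad n (S : 'M[R]_n) : continuous (fun v : 'rV[R]_n => (v *m S *m v^T) 0 0).
Proof.
have -> : (fun v : 'rV[R]_n => (v *m S *m v^T) 0 0) =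
   (fun v => \sum_j (\sum_i (v 0 i * S i j)) * v 0 j).
  apply/funext => v; rewrite mxE; apply: eq_bigr => j _; rewrite !mxE; congr (_ * _).
apply: cont_sum => j x; apply: continuousM; last exact: coord_continuous.
apply: cont_sum => i y; apply: continuousM; first exact: coord_continuous.
exact: cst_continuous.
Qed.
Lemma quad_exp n (S : 'M[R]_n) (v w : 'rV[R]_n) (h : R) :
  ((v + h *: w) *m S *m (v + h *: w)^T) 0 0 = (v *m S *m v^T) 0 0
   + h * ((v *m S *m w^T) 0 0 + (w *m S *m v^T) 0 0) + h ^+ 2 * (w *m S *m w^T) 0 0.
Proof.
rewrite linearD /= linearZ /= !(mulmxDl, mulmxDr) -?scalemxAl -?scalemxAr -?scalemxAl.
rewrite !mxE; ring.
Qed.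

Lemma quad_sym n (S : 'M[R]_n) (v w : 'rV[R]_n) : S^T = S ->
  (w *m S *m v^T) 0 0 = (v *m S *m w^T) 0 0.
Proof.
move=> Ss.
have E : forall A : 'M[R]_1, A 0 0 = A^T 0 0 by move=> A; rewrite mxE.
rewrite E.
by rewrite !trmx_mul trmxK Ss mulmxA.
Qed.
Lemma sqsum_ge0 n (v : 'rV[R]_n) : 0 <= (v *m v^T) 0 0.
Proof.
rewrite mxE; apply: sumr_ge0 => i _; rewrite mxE -expr2; exact: sqr_ge0.
Qed.

Lemma sqsum_eq0 n (v : 'rV[R]_n) : (v *m v^T) 0 0 = 0 -> v = 0.
Proof.
rewrite mxE => /psumr_eq0P H; apply/rowP => j; rewrite mxE.
have := H (fun i _ => ltac:(by rewrite mxE -expr2 sqr_ge0)) j isT; rewrite mxE => /eqP.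
by rewrite mulf_eq0 orbb => /eqP.
Qed.

Lemma sq_le_sqsum n (v : 'rV[R]_n) j : v 0 j ^+ 2 <= (v *m v^T) 0 0.
Proof.
rewrite mxE (bigD1 j) //= mxE -expr2 lerDl; apply: sumr_ge0 => i _.
rewrite mxE -expr2; exact: sqr_ge0.
Qed.
Lemma mul_deltaT m n (A : 'M[R]_(m, n)) i j : (A *m (delta_mx (0:'I_1) j)^T) i 0 = A i j.
Proof. by rewrite trmx_delta -colE mxE. Qed.

Lemma delta_mul m n (A : 'M[R]_(m, n)) i j : (delta_mx (0:'I_1) i *m A) 0 j = A i j.
Proof. by rewrite -rowE mxE. Qed.

Lemma quad_bound n (S : 'M[R]_n) c : S^T = S ->
  (forall mu, eigenvalue S mu -> mu <= c) ->
  forall v : 'rV[R]_n, (v *m S *m v^T) 0 0 <= c * (v *m v^T) 0 0.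
Proof.
case: n S => [|n] S Ssym Hev v.
  by rewrite !mxE !big_ord0 mulr0.
pose q := fun v : 'rV[R]_n.+1 => (v *m S *m v^T) 0 0.
pose N := fun v : 'rV[R]_n.+1 => (v *m v^T) 0 0.
pose A := [set v : 'rV[R]_n.+1 | N v = 1].
have A0 : A !=set0.
  exists (delta_mx 0 ord0); rewrite /A /N /= mul_deltaT mxE !eqxx //.
have cA : compact A.
  apply: bounded_closed_compact.
    rewrite /= /bounded_near; near=> M => x /= Ax.
    have M1 : 1 <= M by near: M; exact: (nbhs_pinfty_ge (num_real 1)).
    rewrite [X in X <= _]/Num.Def.normr /= mx_normrE; apply: bigmax_le => [|ij _].
      exact: le_trans M1.
    have ij1 : ij.1 = 0 by apply/val_inj; case: ij.1 => -[].
    apply: le_trans M1; rewrite ij1.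
    have := @sq_le_sqsum _ x ij.2; rewrite -/(N x) (Ax : N x = 1) => H.
    by rewrite ler_norml; apply/andP; split; nra.
  have -> : A = N @^-1` [set 1] by [].
  apply: preimage_closed; last exact: closed_eq.
  move=> x _; have := @cont_quad n.+1 1 x.
  by rewrite /N; under eq_fun do rewrite mulmx1.
have cq : {within A, continuous q} by apply: continuous_subspaceT; exact: cont_quad.
have [vm vmA vmmax] := compact_EVT_max A0 cA cq.
have Nvm : N vm = 1 by move: vmA; rewrite inE.
set m := q vm.
have Nge0 w : 0 <= N w by exact: sqsum_ge0.
have Hle w : q w <= m * N w.
  have [Nw0|Nwn0] := eqVneq (N w) 0.
    by rewrite Nw0; move/sqsum_eq0: Nw0 => ->; rewrite /q !mul0mx mxE mulr0.
  have Nwp : 0 < N w by rewrite lt_def Nwn0 Nge0.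
  pose r := Num.sqrt (N w).
  have rp : 0 < r by rewrite sqrtr_gt0.
  have r2 : r ^+ 2 = N w by rewrite sqr_sqrtr // ltW.
  have wA : (r^-1 *: w) \in A.
    rewrite inE /A /= /N linearZ /= -scalemxAl -scalemxAr 2!mxE -/(N w) -r2.
    by field; rewrite gt_eqF.
  have := vmmax _ wA; rewrite /q linearZ /= -scalemxAl -scalemxAl -scalemxAr 2!mxE.
  rewrite -/(q w) -/m -r2 => H.
  have -> : q w = r ^+ 2 * (r^-1 * (r^-1 * q w)) by field; rewrite gt_eqF.
  by rewrite mulrC ler_wpM2r // sqr_ge0.
have NE x : N x = (x *m 1%:M *m x^T) 0 0 by rewrite /N mulmx1.
have Hv : vm *m S = m *: vm.
  apply/rowP => j; rewrite [RHS]mxE.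
  pose e : 'rV[R]_n.+1 := delta_mx (0:'I_1) j.
  have qe : q e = S j j by rewrite /q mul_deltaT delta_mul.
  have Ne : N e = 1 by rewrite /N mul_deltaT mxE !eqxx.
  have Hjj := Hle e; rewrite qe Ne mulr1 in Hjj.
  have key2 h : 2 * h * ((vm *m S) 0 j - m * vm 0 j) + h ^+ 2 * (S j j - m) <= 0.
    have := Hle (vm + h *: e); rewrite /q /= quad_exp (@quad_sym _ S vm e Ssym) -/(q vm) -/m.
    rewrite -[(e *m S *m e^T) 0 0]/(q e) qe /e mul_deltaT -/e.
    rewrite NE quad_exp (@quad_sym _ 1%:M vm e (trmx1 _ _)) -!NE Nvm Ne /e mulmx1 mul_deltaT => H; nra.
  set a := (vm *m S) 0 j - m * vm 0 j in key2.
  set k := S j j - m in key2.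
  have k0 : k <= 0 by rewrite /k subr_le0.
  pose t := (1 - k)^-1.
  have t1 : t * (1 - k) = 1 by rewrite /t mulVf // gt_eqF // subr_gt0 (le_lt_trans k0).
  have tp : 0 < t by rewrite /t invr_gt0 subr_gt0 (le_lt_trans k0).
  have := key2 (a * t) => H.
  have tk : t * k = t - 1 by move: t1; rewrite mulrBr mulr1; lra.
  have E : 2 * (a * t) * a + (a * t) ^+ 2 * k = a ^+ 2 * (t * (2 + t * k)) by ring.
  rewrite E tk in H.
  have X0 : 0 < t * (2 + (t - 1)) by apply: mulr_gt0 => //; lra.
  have a0 : a ^+ 2 <= 0.
    by move: H; rewrite pmulr_lle0.
  have : a == 0 by rewrite -sqrf_eq0 eq_le a0 sqr_ge0.
  by rewrite /a subr_eq0 => /eqP.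
have vm0 : vm != 0 by apply/eqP => E0; move: Nvm; rewrite E0 /N mul0mx mxE => /eqP; rewrite eq_sym oner_eq0.
have mc : m <= c by apply: Hev; apply/eigenvalueP; exists vm.
by apply: le_trans (Hle v) _; rewrite ler_wpM2r.
Unshelve. all: by end_near.
Qed.
Lemma is_derive_line n (F : 'rV[R]_n -> 'rV[R]_n) (u b : 'rV[R]_n) s :
  differentiable F (s *: u + b) ->
  is_derive s 1 (fun s : R => F (s *: u + b)) (u *m jacobian F (s *: u + b)).
Proof.
move=> dF.
have E : (fun h : R => h^-1 *: (F ((h *: 1 + s) *: u + b) - F (s *: u + b))) =
         (fun h : R => h^-1 *: (F (h *: u + (s *: u + b)) - F (s *: u + b))).
  by apply/funext => h; rewrite -[h *: 1]/(h * 1) mulr1 scalerDl addrA.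
apply: DeriveDef.
  rewrite /derivable /=; rewrite [X in cvg (X @ _)]E.
  exact: (diff_derivable (v := u) dF).
rewrite -deriveEjacobian //.
by rewrite /derive /= [X in lim (X @ _)]E.
Qed.
Lemma is_derive_dot n (G : R -> 'rV[R]_n) (u : 'rV[R]_n) (s : R) (dG : 'rV[R]_n) :
  is_derive s 1 G dG -> is_derive s 1 (fun s => (u *m (G s)^T) 0 0) ((u *m dG^T) 0 0).
Proof.
move=> HG.
have dv : derivable G s 1 by case: HG.
have Hc i : is_derive s 1 (fun s => G s 0 i) (dG 0 i).
  apply: DeriveDef; first by move/derivable_mxP: dv; apply.
  by have := derive_mx dv; rewrite derive_val => ->; rewrite mxE.
have -> : (fun s => (u *m (G s)^T) 0 0) = \sum_i (u 0 i \*: (fun s => G s 0 i)).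
  by apply/funext => x; rewrite mxE fct_sumE; apply: eq_bigr => i _; rewrite !mxE.
have -> : (u *m dG^T) 0 0 = \sum_i u 0 i *: dG 0 i.
  by rewrite mxE; apply: eq_bigr => i _; rewrite !mxE.
by apply: is_derive_sum => i; apply: is_deriveZ.
Qed.
Lemma entryZ m n (A : 'M[R]_(m, n)) a i j : (a *: A) i j = a * A i j.
Proof. by rewrite mxE. Qed.
Lemma entryD m n (A B : 'M[R]_(m, n)) i j : (A + B) i j = A i j + B i j.
Proof. by rewrite mxE. Qed.
Lemma entryB m n (A B : 'M[R]_(m, n)) i j : (A - B) i j = A i j - B i j.
Proof. by rewrite !mxE. Qed.

Lemma entryT m n (A : 'M[R]_(m, n)) i j : A^T i j = A j i.
Proof. by rewrite mxE. Qed.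

Lemma scal_tr n (u : 'rV[R]_n) (J : 'M[R]_n) :
  (u *m J^T *m u^T) 0 0 = (u *m J *m u^T) 0 0.
Proof.
have E : forall A : 'M[R]_1, A 0 0 = A^T 0 0 by move=> A; rewrite mxE.
by rewrite [LHS]E !trmx_mul !trmxK mulmxA.
Qed.

Lemma mono_bound n (F : 'rV[R]_n -> 'rV[R]_n) lam (a b : 'rV[R]_n) :
  (forall y, differentiable F y) ->
  (forall y mu, eigenvalue (2^-1 *: (jacobian F y + (jacobian F y)^T)) mu -> mu <= - lam) ->
  ((a - b) *m (F a - F b)^T) 0 0 <= - lam * ((a - b) *m (a - b)^T) 0 0.
Proof.
move=> dF Hev.
set u := a - b.
pose g s := (u *m (F (s *: u + b))^T) 0 0.
pose dg s := (u *m (u *m jacobian F (s *: u + b))^T) 0 0.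
have Hd (s : R) : is_derive s (1:R) g (dg s).
  by apply: is_derive_dot; apply: is_derive_line.
have cg : {within `[0, 1], continuous g}.
  apply: derivable_within_continuous => x _; by case: (Hd x).
have [c _ Hc] := MVT_segment ler01 (fun x _ => Hd x) cg.
have -> : (u *m (F a - F b)^T) 0 0 = g 1 - g 0.
  rewrite /g scale1r scale0r add0r /u subrK linearB /= mulmxBr.
  by move: (_ *m (F a)^T) (_ *m (F b)^T) => X Y; rewrite !mxE.
rewrite Hc subr0 mulr1 /dg; clearbody u.
set J := jacobian F (c *: u + b).
have -> : (u *m (u *m J)^T) 0 0 = (u *m (2^-1 *: (J + J^T)) *m u^T) 0 0.
  rewrite -scalemxAr -scalemxAl mulmxDr !mulmxDl entryZ entryD scal_tr.
  by rewrite trmx_mul mulmxA scal_tr; field.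
apply: quad_bound; last exact: Hev.
by rewrite linearZ /= linearD /= trmxK addrC.
Qed.
Definition Dm n : 'M[R]_(n + n, n) := col_mx 1%:M (- 1%:M).

Lemma Dm_sub n (y : 'rV[R]_(n + n)) : lsubmx y - rsubmx y = y *m Dm n.
Proof. by rewrite -{3}(hsubmxK y) /Dm mul_row_col mulmx1 mulmxN mulmx1. Qed.

Lemma Vdist_E n (y : 'rV[R]_(n + n)) t :
  Vdist y t = ((y *m Dm n) *m (y *m Dm n)^T) 0 0.
Proof.
rewrite /Vdist Dm_sub mxE; apply: eq_bigr => i _. by rewrite entryT expr2.
Qed.

Lemma DV n (a v : 'rV[R]_(n + n)) t :
  'D_v (fun y => @Vdist R n y t) a = 2 * ((a *m Dm n) *m (v *m Dm n)^T) 0 0.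
Proof.
apply: (@derive_quad _ _ _ _ _ (((v *m Dm n) *m (v *m Dm n)^T) 0 0)) => h _.
rewrite !Vdist_E mulmxDl -scalemxAl addrC.
have := @quad_exp _ 1%:M (a *m Dm n) (v *m Dm n) h; rewrite !mulmx1 => ->.
have := (@quad_sym _ 1%:M (a *m Dm n) (v *m Dm n) (trmx1 _ _)); rewrite !mulmx1 => ->; ring.
Qed.

Lemma pderV n (y : 'rV[R]_(n + n)) t k :
  pder (fun y => @Vdist R n y t) k y = 2 * (y *m Dm n *m (Dm n)^T) 0 k.
Proof.
by rewrite /pder DV /ebase trmx_mul mulmxA mul_deltaT.
Qed.

Lemma hessV n (x : 'rV[R]_(n + n)) t :
  hessian (fun y => @Vdist R n y t) x = 2 *: (Dm n *m (Dm n)^T).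
Proof.
apply/matrixP => i j; rewrite [LHS]mxE entryZ.
rewrite /pder; apply: (@derive_quad _ _ _ _ _ 0) => h _.
rewrite !DV mulmxDl mulmxDl -scalemxAl -scalemxAl entryD entryZ.
rewrite /ebase trmx_mul !mulmxA !mul_deltaT -mulmxA delta_mul; ring.
Qed.
Lemma trace_term n d (A B : 'M[R]_(n, d)) :
  2^-1 * \tr ((block_mx A 0 0 B)^T *m (2 *: (Dm n *m (Dm n)^T)) *m block_mx A 0 0 B)
  = \tr (A^T *m A) + \tr (B^T *m B).
Proof.
rewrite -scalemxAr -scalemxAl mxtraceZ mulrA mulVf ?pnatr_eq0 // mul1r.
have E : (Dm n)^T *m block_mx A 0 0 B = row_mx A (- B).
  rewrite /Dm tr_col_mx linearN /= trmx1 mul_row_block.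
  by rewrite !mul1mx !mulmx0 !mulNmx !mul1mx ?oppr0 ?addr0 ?add0r.
have E2 : (block_mx A 0 0 B)^T *m Dm n = (row_mx A (- B))^T.
  by rewrite -E trmx_mul trmxK.
rewrite mulmxA E2 -mulmxA E mxtrace_mulC tr_row_mx mul_row_col mxtraceD.
by rewrite linearN /= mulNmx mulmxN opprK !(mxtrace_mulC _ (_^T)).
Qed.
Lemma drift_term n (f : 'rV[R]_n -> R -> 'rV[R]_n) (x : 'rV[R]_(n + n)) t :
  \sum_i pder (fun y => @Vdist R n y t) i x * aug_drift f x t 0 i =
  2 * ((lsubmx x - rsubmx x) *m (f (lsubmx x) t - f (rsubmx x) t)^T) 0 0.
Proof.
under eq_bigr do rewrite pderV.
have -> : f (lsubmx x) t - f (rsubmx x) t = aug_drift f x t *m Dm n.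
  by rewrite /aug_drift /Dm mul_row_col mulmx1 mulmxN mulmx1.
rewrite Dm_sub trmx_mul mulmxA mxE mulr_sumr; apply: eq_bigr => i _.
by rewrite entryT mulrA.
Qed.
End S.

Theorem lemma1 (R : realType) (n d : nat)
  (f : 'rV[R]_n -> R -> 'rV[R]_n) (sigma : 'rV[R]_n -> R -> 'M[R]_(n, d))
  (K1 K2 lambda C : R) :
  (* f continuously differentiable in its first argument *)
  (forall t, 0 <= t -> forall a, differentiable (fun y => f y t) a) ->
  (forall t, 0 <= t -> forall i j,
      continuous (fun a => jacobian (fun y => f y t) a i j)) ->
  0 < K1 -> 0 < K2 ->
  (* Lipschitz condition *)
  (forall t a b, 0 <= t ->
     enorm (f a t - f b t) + fnorm (sigma a t - sigma b t) <= K1 * enorm (a - b)) ->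
  (* growth condition *)
  (forall t a, 0 <= t ->
     enorm (f a t) ^+ 2 + fnorm (sigma a t) ^+ 2 <= K2 * (1 + enorm a ^+ 2)) ->
  (* (H1): every (hence the largest) eigenvalue of the symmetric part of the
     Jacobian is at most -lambda *)
  0 < lambda ->
  (forall t a mu, 0 <= t ->
     eigenvalue (2^-1 *: (jacobian (fun y => f y t) a
                          + (jacobian (fun y => f y t) a)^T)) mu ->
     mu <= - lambda) ->
  (* (H2) *)
  (forall t a, 0 <= t -> \tr ((sigma a t)^T *m sigma a t) <= C) ->
  forall (x : 'rV[R]_(n + n)) (t : R), 0 <= t ->
    generator (aug_drift f) (aug_diff sigma) (@Vdist R n) x t
      <= - (2 * lambda) * Vdist x t + 2 * C.
Proof.
move=> dF _ _ _ _ _ lam0 H1 H2 x t t0.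
rewrite /generator.
have -> : derive1 (fun s => Vdist x s) t = 0.
  by rewrite derive1E; apply: (derive_cst (Vdist x 0)).
rewrite hessV drift_term /aug_diff trace_term.
have Hm := @mono_bound R n (fun y => f y t) lambda (lsubmx x) (rsubmx x)
  (dF t t0) (fun y mu => H1 t y mu t0).
have Ha := H2 t (lsubmx x) t0; have Hb := H2 t (rsubmx x) t0.
rewrite (@Vdist_E R n x t) -Dm_sub.
lra.
Qed.
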